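(* Let $G$ be a (finite, simple) graph with at least one edge. Then $\mathrm{tw}(G) \le \mathrm{cocirc}(G)$, i.e. the treewidth of $G$ is at most its cocircumference.
   Context: A bond of a graph $G$ is an inclusion-wise minimal set of edges $F$ such that $G-F$ has more connected components than $G$. The cocircumference $\mathrm{cocirc}(G)$ of a graph with at least one edge is the maximum size of a bond of $G$. A tree-decomposition of $G$ is a family $\{X_u : u\in V(T)\}$ of subsets of $V(G)$ indexed by the nodes of a tree $T$ such that for every $x\in V(G)$ the nodes $u$ with $x\in X_u$ induce a non-empty subtree of $T$, and every edge $xy$ of $G$ satisfies $\{x,y\}\subseteq X_u$ for some $u$; its width is $\max_u |X_u|-1$, and the treewidth $\mathrm{tw}(G)$ is the minimum width of a tree-decomposition of $G$. *)

(* Defs.v *)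
From mathcomp Require Import all_boot.
Set Implicit Arguments. Unset Strict Implicit. Unset Printing Implicit Defensive.

Definition simple_graph (T : finType) (e : rel T) : Prop :=
  symmetric e /\ irreflexive e.

Definition edges (T : finType) (e : rel T) : {set {set T}} :=
  [set [set p.1; p.2] | p in [set p : T * T | e p.1 p.2]].

Definition del_edges (T : finType) (e : rel T) (F : {set {set T}}) : rel T :=
  [rel x y | e x y && ([set x; y] \notin F)].

Definition ncomp (T : finType) (r : rel T) : nat :=
  #|[set [set y | connect r x y] | x : T]|.

Definition disconnecting (T : finType) (e : rel T) (F : {set {set T}}) : bool :=
  (F \subset edges e) && (ncomp e < ncomp (del_edges e F)).

Definition is_bond (T : finType) (e : rel T) (F : {set {set T}}) : bool :=
  disconnecting e F &&
  [forall F' : {set {set T}}, (F' \proper F) ==> ~~ disconnecting e F'].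

Definition cocirc (T : finType) (e : rel T) : nat :=
  \max_(F : {set {set T}} | is_bond e F) #|F|.

(* A (finite) tree on node type U with adjacency t: nonempty, simple,
   connected, and acyclic (every edge is a bridge, i.e. deleting the edge
   uv leaves no u-v path). *)
Definition is_tree (U : finType) (t : rel U) : Prop :=
  (0 < #|U|) /\ simple_graph t /\
  (forall u v : U, connect t u v) /\
  (forall u v : U, t u v -> ~~ connect (del_edges t [set [set u; v]]) u v).

Definition tree_decomposition (T : finType) (e : rel T)
    (U : finType) (t : rel U) (X : U -> {set T}) : Prop :=
  is_tree t /\
  (forall x : T,
      (exists u : U, x \in X u) /\
      (forall u v : U, x \in X u -> x \in X v ->
         connect [rel a b | t a b && (x \in X a) && (x \in X b)] u v)) /\
  (forall x y : T, e x y -> exists u : U, (x \in X u) && (y \in X u)).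

(* Width of a tree-decomposition is at most k: max_u |X_u| - 1 <= k. *)
Definition width_le (U : finType) (T : finType) (X : U -> {set T}) (k : nat) : Prop :=
  forall u : U, #|X u| <= k.+1.

(* tw(G) <= k : some tree-decomposition of G has width at most k
   (tw is the minimum width, so this is exactly tw(G) <= k). *)
Definition treewidth_le (T : finType) (e : rel T) (k : nat) : Prop :=
  exists (U : finType) (t : rel U) (X : U -> {set T}),
    tree_decomposition e t X /\ width_le X k.

(* Main.v *)
Require Import Defs.
From mathcomp Require Import all_boot.
Set Implicit Arguments. Unset Strict Implicit. Unset Printing Implicit Defensive.


Definition ind (T : finType) (e : rel T) (S : {set T}) : rel T :=
  [rel x y | e x y && (x \in S) && (y \in S)].

Lemma connect_mono (T : finType) (r r' : rel T) :
  subrel r r' -> subrel (connect r) (connect r').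
Proof. by move=> H; apply: connect_sub => x y /H; apply: connect1. Qed.

Lemma set2C (T : finType) (x y : T) : [set x; y] = [set y; x].
Proof. by apply/setP=> z; rewrite !inE orbC. Qed.

Lemma del_sym (T : finType) (e : rel T) F :
  symmetric e -> symmetric (del_edges e F).
Proof. by move=> se x y; rewrite /del_edges /= se set2C. Qed.

Lemma ind_sym (T : finType) (e : rel T) S :
  symmetric e -> symmetric (ind e S).
Proof. by move=> se x y; rewrite /ind /= se; case: (x \in S); case: (y \in S); rewrite ?andbF. Qed.

Definition cls (T : finType) (r : rel T) (x : T) : {set T} := [set y | connect r x y].

Lemma connect_inv (T : finType) (r : rel T) (P : pred T) x y :
  (forall u v, P u -> r u v -> P v) -> connect r x y -> P x -> P y.
Proof.
move=> H /connectP [p pth ->]; elim: p x pth => [|z p IH] x //=.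
by case/andP=> rxz pth Px; apply: IH pth (H _ _ Px rxz).
Qed.

Lemma ncomp_le (T : finType) (r r' : rel T) :
  connect_sym r -> subrel r' r -> #|[set cls r x | x : T]| <= #|[set cls r' x | x : T]|.
Proof.
move=> sr sub.
pose h (Y : {set T}) := [set z | [exists y in Y, connect r y z]].
have hE x : h (cls r' x) = cls r x.
  apply/setP=> z; rewrite !inE; apply/existsP/idP.
    case=> y /andP []; rewrite inE => /(connect_mono sub) xy yz.
    exact: connect_trans xy yz.
  by move=> xz; exists x; rewrite inE connect0.
have -> : [set cls r x | x : T] = [set h x | x in [set cls r' x | x : T]].
  by rewrite -imset_comp; apply: eq_imset => x /=; rewrite hE.
exact: leq_imset_card.
Qed.


Lemma ncomp_lt (T : finType) (r r' : rel T) x y :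
  connect_sym r -> subrel r' r -> connect r x y -> ~~ connect r' x y ->
  ncomp r < ncomp r'.
Proof.
move=> sr sub rxy nr'xy; rewrite /ncomp.
pose h (Y : {set T}) := [set z | [exists y in Y, connect r y z]].
have hE x' : h (cls r' x') = cls r x'.
  apply/setP=> z; rewrite !inE; apply/existsP/idP.
    case=> y' /andP []; rewrite inE => /(connect_mono sub) xy yz.
    exact: connect_trans xy yz.
  by move=> xz; exists x'; rewrite inE connect0.
have -> : [set [set y | connect r x y] | x : T] = [set h x | x in [set cls r' x | x : T]].
  by rewrite -imset_comp; apply: eq_imset => z /=; rewrite hE.
rewrite ltn_neqAle leq_imset_card andbT; apply/negP => /imset_injP inj.
have : cls r' x = cls r' y.
  apply: inj; rewrite ?imset_f //.
  rewrite !hE; apply/setP=> z; rewrite !inE; apply/idP/idP => H.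
    by apply: connect_trans H; rewrite sr.
  exact: connect_trans rxy H.
move/setP/(_ y); rewrite !inE connect0 => H.
by move: nr'xy; rewrite H.
Qed.

Lemma ncomp_eq (T : finType) (r r' : rel T) :
  (forall x y, connect r x y = connect r' x y) -> ncomp r = ncomp r'.
Proof.
move=> H; rewrite /ncomp.
have -> : [set [set y | connect r x y] | x : T] = [set [set y | connect r' x y] | x : T] => //.
by apply: eq_imset => x; apply/setP => z; rewrite !inE H.
Qed.

Definition cross (T : finType) (e : rel T) (A B : {set T}) : {set {set T}} :=
  [set f : {set T} | [exists a in A, exists b in B, e a b && (f == [set a; b])]].

Lemma crossP (T : finType) (e : rel T) (A B : {set T}) f :
  reflect (exists a b, [/\ a \in A, b \in B, e a b & f = [set a; b]]) (f \in cross e A B).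
Proof.
rewrite inE; apply: (iffP existsP).
  case=> a /andP [aA /existsP [b /andP [bB /andP [eab /eqP ->]]]].
  by exists a, b.
case=> a [b [aA bB eab ->]]; exists a; rewrite aA; apply/existsP; exists b.
by rewrite bB eab eqxx.
Qed.

Lemma cross_edges (T : finType) (e : rel T) (A B : {set T}) : cross e A B \subset edges e.
Proof.
apply/subsetP => f /crossP [a [b [_ _ eab ->]]].
rewrite /edges; apply/imsetP; exists (a, b) => //; by rewrite inE.
Qed.

Lemma bond_lemma (T : finType) (e : rel T) (K B : {set T}) a0 b0 :
  symmetric e ->
  (forall x y, e x y -> x \in K -> y \in K) ->
  B \subset K ->
  (forall x y, x \in K :\: B -> y \in K :\: B -> connect (ind e (K :\: B)) x y) ->
  (forall x y, x \in B -> y \in B -> connect (ind e B) x y) ->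
  a0 \in K :\: B -> b0 \in B -> e a0 b0 ->
  is_bond e (cross e (K :\: B) B).
Proof.
move=> se Kcl BK cA cB a0A b0B e0.
set A := K :\: B.
have AB z : z \in A -> z \notin B by rewrite inE => /andP [].
have AB' z : z \in B -> z \notin A by rewrite inE => ->.
have notF u w : (u \in A) = (w \in A) -> [set u; w] \notin cross e A B.
  move=> Huw; apply/negP => /crossP [a [b [aA bB _ Hs]]].
  have : a \in [set u; w] by rewrite Hs set21.
  have : b \in [set u; w] by rewrite Hs set22.
  have nbA : b \notin A by rewrite inE bB.
  move=> /set2P Hb /set2P Ha.
  case: Ha => Ha; case: Hb => Hb; subst.
  - by rewrite aA in nbA.
  - by move: nbA; rewrite -Huw aA.
  - by move: nbA; rewrite Huw aA.
  - by rewrite aA in nbA.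
have inA u : u \in A = (u \in K) && (u \notin B) by rewrite inE andbC.
have cF a b : a \in A -> b \in B -> e a b -> [set a; b] \in cross e A B.
  by move=> aA bB eab; apply/crossP; exists a, b.
rewrite /is_bond /disconnecting cross_edges /=; apply/andP; split.
  apply: (@ncomp_lt _ _ _ a0 b0).
  - exact: sym_connect_sym.
  - by move=> x y /andP [].
  - exact: connect1.
  apply/negP => H.
  have : b0 \in A.
    apply: (@connect_inv _ _ (fun z => z \in A) a0 b0 _ H a0A) => u v uA /andP [euv nF].
    have vK : v \in K by apply: Kcl euv _; move: uA; rewrite inA => /andP [].
    rewrite inA vK /=; apply/negP => vB.
    by move: nF; rewrite cF.
  by move/AB; rewrite b0B.
apply/forallP => F'; apply/implyP => /properP [sub [f0 f0F f0F']].
rewrite negb_and; apply/orP; right; rewrite -leqNgt.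
have sd : symmetric (del_edges e F') by apply: del_sym.
case/crossP: f0F => a1 [b1 [a1A b1B e1 f0E]].
have dA : subrel (ind e A) (del_edges e F').
  move=> u w /andP [/andP [euw uA] wA]; rewrite /del_edges /= euw /=.
  apply/negP => /(subsetP sub); apply/negP; apply: notF; by rewrite uA wA.
have dB : subrel (ind e B) (del_edges e F').
  move=> u w /andP [/andP [euw uB] wB]; rewrite /del_edges /= euw /=.
  apply/negP => /(subsetP sub); apply/negP; apply: notF.
  by rewrite (negbTE (AB' _ uB)) (negbTE (AB' _ wB)).
have cab a b : a \in A -> b \in B -> connect (del_edges e F') a b.
  move=> aA bB.
  apply: (connect_trans (connect_mono dA (cA _ _ aA a1A))).
  apply: (connect_trans _ (connect_mono dB (cB _ _ b1B bB))).
  by apply: connect1; rewrite /del_edges /= e1 -f0E f0F'.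
rewrite (@ncomp_eq _ (del_edges e F') e) // => x y; apply/idP/idP.
  by apply: connect_mono => u w /andP [].
apply: connect_sub => u w euw.
case uwF: ([set u; w] \in F'); last by apply: connect1; rewrite /del_edges /= euw uwF.
move/(subsetP sub): uwF => /crossP [a [b [aA bB _ Hs]]].
have ua : u \in [set a; b] by rewrite -Hs set21.
have wa : w \in [set a; b] by rewrite -Hs set22.
have sc := sym_connect_sym sd.
case/set2P: ua => ->; case/set2P: wa => ->; rewrite ?connect0 //.
  exact: cab.
by rewrite sc; apply: cab.
Qed.


Definition good_on (T : finType) (e : rel T) (P : {set T}) (pos : T -> nat) :=
  forall v, v \in P ->
    (exists w, [/\ w \in P, e v w & pos w < pos v]) \/
    (forall w, w \in P -> pos w < pos v -> ~~ connect e v w).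

Lemma order_step (T : finType) (e : rel T) k :
  k <= #|T| -> exists (P : {set T}) (pos : T -> nat),
    [/\ #|P| = k, {in P &, injective pos}, (forall v, v \in P -> pos v < k)
      & good_on e P pos].
Proof.
elim: k => [_|k IH lek].
  exists set0, (fun _ => 0); split; rewrite ?cards0 //.
  - by move=> x y; rewrite inE.
  - by move=> v; rewrite inE.
  - by move=> v; rewrite inE.
have [P [pos [cP inj bd gd]]] := IH (ltnW lek).
have [v0 v0P] : exists v, v \notin P.
  case: (pickP (fun x => x \notin P)) => [x Hx|H]; first by exists x.
  have : #|P| = #|T|.
    apply/eqP; rewrite eqn_leq max_card /= -cardsT subset_leq_card //.
    by apply/subsetP => x _; move: (H x) => /= /negbFE.
  by rewrite cP => E; move: lek; rewrite E ltnn.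
pose b := [exists v, (v \notin P) && [exists w in P, e v w]].
pose v := if b then odflt v0 [pick v | (v \notin P) && [exists w in P, e v w]] else v0.
have vP : v \notin P.
  rewrite /v; case: ifP => _ //; case: pickP => //= x /andP [] //.
pose pos' x := if x == v then k else pos x.
exists (v |: P), pos'; split.
- by rewrite cardsU1 vP cP.
- move=> x y; rewrite !inE /pos'.
  case: (eqVneq x v) => [->|xv]; case: (eqVneq y v) => [->|yv] //= xP yP.
  + by move=> E; move: (bd _ yP); rewrite -E ltnn.
  + by move=> E; move: (bd _ xP); rewrite E ltnn.
  + exact: inj.
- move=> x; rewrite !inE /pos'; case: (eqVneq x v) => //= _ xP.
  by rewrite ltnS ltnW // bd.
move=> x; rewrite !inE => /orP [/eqP ->|xP].
  rewrite /pos' eqxx.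
  case bE: b.
    have [w wP ewv] : exists2 w, w \in P & e v w.
      move: vP; rewrite /v bE; case: pickP => [x' /andP [_ /existsP [w /andP [wP ew]]] _ |].
        by exists w.
      by move=> H; move: bE => /existsP [x' Hx']; move: (H x'); rewrite Hx'.
    left; exists w; rewrite !inE wP orbT ewv; split => //.
    by have := (bd _ wP); rewrite /pos'; case: (eqVneq w v) => [E|]; [move: vP; rewrite -E wP|].
  right => w; rewrite !inE /pos'; case: (eqVneq w v) => [_ _|wv /= wP _]; first by rewrite ltnn.
  apply/negP => cvw.
  have : w \notin P.
    apply: (@connect_inv _ _ (fun z => z \notin P) v w _ cvw vP) => u u' uP euu'.
    apply/negP => u'P; suff : b by rewrite bE.
    apply/existsP; exists u; rewrite uP /=; apply/existsP; exists u'; by rewrite u'P euu'.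
  by rewrite wP.
have xv : x != v by apply: contraNneq vP => <-.
rewrite /pos' (negbTE xv).
case: (gd _ xP) => [[w [wP exw lt]]|H].
  left; exists w; rewrite inE wP orbT exw; split => //.
  have wv : w != v by apply: contraNneq vP => <-.
  by rewrite (negbTE wv).
right => w; rewrite !inE /pos'; case: (eqVneq w v) => [_ _|wv /= wP].
  by move=> lt; move: (ltn_trans lt (bd _ xP)); rewrite ltnn.
exact: H.
Qed.

Lemma exists_order (T : finType) (e : rel T) :
  exists pos : T -> nat, injective pos /\
    forall v, (exists w, e v w /\ pos w < pos v) \/
              (forall w, pos w < pos v -> ~~ connect e v w).
Proof.
have [P [pos [cP inj _ gd]]] := order_step e (leqnn #|T|).
have PT : P = setT by apply/eqP; rewrite eqEcard subsetT cardsT cP leqnn.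
subst P; exists pos; split.
  by move=> x y; apply: inj; rewrite inE.
move=> v; case: (gd v (in_setT v)) => [[w [_ ? ?]]|H].
  by left; exists w.
by right => w; apply: H; rewrite inE.
Qed.


Section Main.
Variable T : finType.
Variable e : rel T.
Hypothesis se : symmetric e.
Hypothesis ie : irreflexive e.
Variable pos : T -> nat.
Hypothesis ipos : injective pos.
Hypothesis gpos : forall v, (exists w, e v w /\ pos w < pos v) \/
              (forall w, pos w < pos v -> ~~ connect e v w).
Variable x0 : T.

Definition L c := [set w | pos c <= pos w].
Definition C c := [set w | connect (ind e (L c)) c w].
Definition Nb c := [set w | (w \notin C c) && [exists u in C c, e w u]].
Definition X c := c |: Nb c.
Definition r := [arg min_(w < x0) pos w].
Definition p c := match [pick w in Nb c] with
  | Some w0 => [arg max_(w > w0 in Nb c) pos w]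
  | None => r end.

Lemma r_min w : pos r <= pos w.
Proof. by rewrite /r; case: arg_minnP => // x _ H; apply: H. Qed.

Lemma C_L c w : w \in C c -> pos c <= pos w.
Proof.
rewrite inE => H.
have : w \in L c.
  apply: (@connect_inv _ _ (fun z => z \in L c) c w _ H); last by rewrite inE.
  by move=> u v _ /andP [_ ->].
by rewrite inE.
Qed.

Lemma C_self c : c \in C c.
Proof. by rewrite inE connect0. Qed.

Lemma C_closed c w u : pos c <= pos w -> u \in C c -> e w u -> w \in C c.
Proof.
move=> lw uC ewu; rewrite inE; apply: (connect_trans (_ : connect _ c u)).
  by move: uC; rewrite inE.
apply: connect1; rewrite /ind /= se ewu !inE lw andbT.
exact: C_L uC.
Qed.

Lemma Nb_lt c w : w \in Nb c -> pos w < pos c.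
Proof.
rewrite inE => /andP [wC /existsP [u /andP [uC ewu]]].
rewrite ltnNge; apply/negP => lw.
by move: wC; rewrite (C_closed lw uC ewu).
Qed.

Lemma p_Nb c w : w \in Nb c -> p c \in Nb c /\ pos w <= pos (p c).
Proof.
move=> wN; rewrite /p; case: pickP => [w0 w0N|H]; last by move: (H w); rewrite wN.
case: arg_maxnP => // x xN H; split => //; exact: H.
Qed.

Lemma p_r : p r = r.
Proof.
rewrite /p; case: pickP => // w wN.
by move: (Nb_lt wN); rewrite ltnNge r_min.
Qed.

Lemma p_lt c : c != r -> pos (p c) < pos c.
Proof.
move=> cr; rewrite /p; case: pickP => [w0 w0N|_].
  case: arg_maxnP => // x xN _; exact: Nb_lt.
rewrite ltn_neqAle r_min andbT; apply: contra cr => /eqP E.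
by rewrite (ipos E).
Qed.

Lemma p_le c : pos (p c) <= pos c.
Proof.
case: (eqVneq c r) => [->|cr]; first by rewrite p_r.
exact: ltnW (p_lt cr).
Qed.

Lemma C_sub d w : p d \in Nb d -> w \in C d -> w \in C (p d).
Proof.
move=> pN wC.
have lt := Nb_lt pN.
have LL : subrel (ind e (L d)) (ind e (L (p d))).
  move=> a b /andP [/andP [eab aL] bL]; rewrite /ind /= eab !inE.
  by move: aL bL; rewrite !inE => aL bL; rewrite !(leq_trans (ltnW lt)).
move: pN; rewrite inE => /andP [_ /existsP [u0 /andP [u0C epu]]].
rewrite inE; apply: (@connect_trans _ _ u0).
  apply: connect1; rewrite /ind /= epu !inE leqnn /=.
  exact: leq_trans (ltnW lt) (C_L u0C).
apply: (@connect_trans _ _ d).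
  rewrite (sym_connect_sym (ind_sym _ se)).
  by apply: (connect_mono LL); move: u0C; rewrite inE.
by apply: (connect_mono LL); move: wC; rewrite inE.
Qed.

Definition t := [rel a b | (a != b) && ((p a == b) || (p b == a))].

Lemma t_sym : symmetric t.
Proof. by move=> a b; rewrite /t /= eq_sym orbC. Qed.

Definition bagrel x := [rel a b | t a b && (x \in X a) && (x \in X b)].

Lemma chain x d : x \in X d -> connect (bagrel x) d x.
Proof.
move: {2}(pos d).+1 (ltnSn (pos d)) => n; elim: n d => // n IH d ltd.
rewrite /X in_setU1 => /orP [/eqP ->|xN]; first exact: connect0.
have [pN le] := p_Nb xN.
have pd : p d != d by apply: contraTneq (Nb_lt pN) => ->; rewrite ltnn.
have xX : x \in X (p d).
  case: (eqVneq (p d) x) => [->|pdx]; first exact: setU11.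
  have lt : pos x < pos (p d) by rewrite ltn_neqAle le andbT; apply: contra pdx => /eqP /ipos ->.
  rewrite /X in_setU1; apply/orP; right.
  move: xN; rewrite !inE => /andP [_ /existsP [u /andP [uC exu]]].
  apply/andP; split.
    by apply/negP => xC; move: (@C_L (p d) x); rewrite inE => /(_ xC); rewrite leqNgt lt.
  by apply/existsP; exists u; rewrite exu (C_sub pN uC).
apply: (@connect_trans _ _ (p d)).
  apply: connect1; rewrite /bagrel /= xX andbT /t /= eq_sym pd eqxx /=.
  by rewrite /X in_setU1 xN orbT.
apply: IH xX.
by rewrite -ltnS; apply: leq_trans (Nb_lt pN) _.
Qed.

Lemma to_root u : connect t u r.
Proof.
move: {2}(pos u).+1 (ltnSn (pos u)) => n; elim: n u => // n IH u ltu.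
case: (eqVneq u r) => [->|ur]; first exact: connect0.
have lt := p_lt ur.
apply: (@connect_trans _ _ (p u)); last by apply: IH; apply: leq_trans lt _.
apply: connect1; rewrite /t /= eqxx /= andbT.
by apply/eqP => E; move: lt; rewrite -E ltnn.
Qed.

Lemma fdesc w u : connect (frel p) w u -> pos u <= pos w.
Proof.
move=> H; apply: (@connect_inv _ _ (fun z => pos z <= pos w) w u _ H) => //.
by move=> a b le /eqP <-; apply: leq_trans (p_le a) le.
Qed.

Lemma fstep w u : connect (frel p) w u -> w != u -> connect (frel p) (p w) u.
Proof.
move=> /connectP [[|x s] /= pth ->]; first by rewrite eqxx.
move: pth => /andP [/eqP <- pth] _.
by apply/connectP; exists s.
Qed.

Lemma bridge1 u : u != p u -> ~~ connect (del_edges t [set [set u; p u]]) u (p u).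
Proof.
move=> up; apply/negP => H.
have : connect (frel p) (p u) u.
  apply: (@connect_inv _ _ (fun z => connect (frel p) z u) u (p u) _ H (connect0 _ _)).
  move=> a b au /andP [/andP [ab pab] nF].
  case/orP: pab => /eqP E.
    case: (eqVneq a u) => [Eau|au'].
      by move: nF; rewrite -E Eau inE eqxx.
    by rewrite -E; apply: fstep.
  by apply: (connect_trans _ au); apply: connect1; rewrite /= E.
move/fdesc => le.
have ur : u != r by apply: contraNneq up => ->; rewrite p_r.
by move: (p_lt ur); rewrite ltnNge le.
Qed.

Lemma is_tree_t : is_tree t.
Proof.
split; first by apply/card_gt0P; exists x0.
split; first by split; [exact: t_sym | by move=> a; rewrite /t /= eqxx].
split.
  move=> u v; apply: (connect_trans (to_root u)).
  by rewrite (sym_connect_sym t_sym); apply: to_root.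
move=> u v /andP [uv /orP [] /eqP E].
  by subst v; apply: bridge1.
subst u; rewrite (sym_connect_sym (del_sym _ t_sym)) set2C.
by apply: bridge1; rewrite eq_sym.
Qed.

Lemma cover x y : e x y -> exists u, (x \in X u) && (y \in X u).
Proof.
wlog lt : x y / pos x < pos y.
  move=> W exy; case: (ltngtP (pos x) (pos y)) => H.
  - exact: W.
  - have [u Hu] : exists u, (y \in X u) && (x \in X u) by apply: W => //; rewrite se.
    by exists u; rewrite andbC.
  - by move: (ipos H) exy => ->; rewrite ie.
move=> exy; exists y; rewrite /X setU11 andbT in_setU1; apply/orP; right.
rewrite inE; apply/andP; split.
  by apply/negP => /C_L; rewrite leqNgt lt.
by apply/existsP; exists y; rewrite C_self exy.
Qed.

Lemma td : tree_decomposition e t X.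
Proof.
split; first exact: is_tree_t.
split; last exact: cover.
move=> x; split; first by exists x; apply: setU11.
move=> u v xu xv; apply: (connect_trans (chain xu)).
rewrite (sym_connect_sym _); first exact: chain.
by move=> a b; rewrite /bagrel /=; have := t_sym a b; rewrite /t /= => ->; case: (x \in X a); case: (x \in X b); rewrite ?andbF ?andbT.
Qed.

Lemma reach_restrict (r' : rel T) c w :
  connect r' c w -> connect (ind r' [set z | connect r' c z]) c w.
Proof.
move=> H; apply: (@connect_inv _ _ (fun z => connect (ind r' [set z | connect r' c z]) c z) c w _ H (connect0 _ _)).
move=> a b ca rab; apply: (connect_trans ca); apply: connect1.
have ca' : connect r' c a by apply: connect_mono ca => x y /andP [/andP []].
by rewrite /ind /= rab !inE ca' (connect_trans ca' (connect1 rab)).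
Qed.

Lemma Nb_le c : #|Nb c| <= cocirc e.
Proof.
case: (set_0Vmem (Nb c)) => [->|[n nN]]; first by rewrite cards0.
have sc := sym_connect_sym se.
pose K := [set w | connect e c w].
pose B := C c.
pose A := K :\: B.
have BK : B \subset K.
  apply/subsetP => w; rewrite !inE; apply: connect_mono => a b /andP [/andP []] //.
have Kcl x y : e x y -> x \in K -> y \in K.
  by rewrite !inE => exy cx; apply: connect_trans cx (connect1 exy).
have cB x y : x \in B -> y \in B -> connect (ind e B) x y.
  have H z : z \in B -> connect (ind e B) c z.
    rewrite inE => /reach_restrict; apply: connect_mono => a b.
    by rewrite /ind /= => /andP [/andP [/andP [/andP [-> _] _] ->] ->].
  move=> xB yB; apply: (connect_trans _ (H _ yB)).
  by rewrite (sym_connect_sym (ind_sym _ se)); apply: H.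
have cK : c \in K by rewrite inE connect0.
pose m := [arg min_(w < c in K) pos w].
have [mK mmin] : m \in K /\ forall w, w \in K -> pos m <= pos w.
  by rewrite /m; case: arg_minnP => // x xK H; split.
have toM a : a \in A -> connect (ind e A) a m.
  move: {2}(pos a).+1 (ltnSn (pos a)) => k; elim: k a => // k IH a lta aA.
  have aK : a \in K by move: aA; rewrite inE => /andP [].
  have aB : a \notin B by move: aA; rewrite inE => /andP [].
  case: (gpos a) => [[w [eaw lt]]|H].
    have wK := Kcl _ _ eaw aK.
    have wB : w \notin B.
      apply/negP => wB.
      case: (leqP (pos c) (pos a)) => ca.
        by move: aB; rewrite /B (C_closed ca wB eaw).
      by move: (C_L wB); rewrite leqNgt (ltn_trans lt ca).
    have wA : w \in A by rewrite inE wB wK.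
    apply: (connect_trans (connect1 _) (IH w _ wA)).
      by rewrite /ind /= eaw aA wA.
    exact: leq_trans lt _.
  case: (ltngtP (pos m) (pos a)) => E.
  - have : connect e a m.
      by move: aK mK; rewrite !inE => ca cm; apply: connect_trans _ cm; rewrite sc.
    by rewrite (negbTE (H _ E)).
  - by move: (mmin _ aK); rewrite leqNgt E.
  - by rewrite (ipos E) connect0.
have cA x y : x \in A -> y \in A -> connect (ind e A) x y.
  move=> xA yA; apply: (connect_trans (toM _ xA)).
  by rewrite (sym_connect_sym (ind_sym _ se)); apply: toM.
move: (nN); rewrite inE => /andP [nC /existsP [u /andP [uC enu]]].
have nA : n \in A.
  rewrite inE nC inE; apply: (connect_trans (_ : connect e c u) (connect1 (_ : e u n))); last by rewrite se.
  by move: uC; rewrite inE; apply: connect_mono => a b /andP [/andP []].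
have bond := bond_lemma se Kcl BK cA cB nA uC enu.
apply: leq_trans (leq_bigmax_cond _ bond).
pose phi (f : {set T}) := odflt c [pick z in f :&: A].
apply: (@leq_trans #|[set phi f | f in cross e A B]|); last exact: leq_imset_card.
apply: subset_leq_card; apply/subsetP => w wN.
move: (wN); rewrite inE => /andP [wC /existsP [u' /andP [u'C ewu]]].
have wA : w \in A.
  rewrite inE wC inE; apply: (connect_trans (_ : connect e c u') (connect1 (_ : e u' w))); last by rewrite se.
  by move: u'C; rewrite inE; apply: connect_mono => a b /andP [/andP []].
apply/imsetP; exists [set w; u'].
  by apply/crossP; exists w, u'.
rewrite /phi; case: pickP => [z|H]; last by move: (H w); rewrite !inE eqxx /=; move: wA; rewrite !inE => ->.
rewrite !inE => /andP [/orP [/eqP -> //|/eqP ->]].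
by move: u'C; rewrite inE => ->.
Qed.
End Main.

Theorem theorem1p3 (T : finType) (e : rel T) :
  simple_graph e -> (exists x y : T, e x y) ->
  treewidth_le e (cocirc e).
Proof.
move=> [se ie] [x0 [y0 _]].
have [pos [ipos gpos]] := exists_order e.
exists T, (t e pos x0), (X e pos); split.
  exact: td.
move=> c; rewrite /X cardsU1.
by rewrite -add1n; apply: leq_add; [apply: leq_b1 | apply: Nb_le].
Qed.
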